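(* Let $X$ be a connected, locally path connected space, $n\in\mathbb{N}$, and let $A_1,\dots,A_n\subseteq X$ be open subsets such that each closure $\overline{A_i}$ is path connected. Let $p:X\to X/(A_1,\dots,A_n)$ be the associated quotient map, and suppose $X/(A_1,\dots,A_n)$ is semi-locally simply connected. Then for every $a\in\bigcup_{i=1}^n A_i$, with $*=p(a)$, the homomorphism $p_*:\pi_1^{top}(X,a)\to\pi_1^{top}(X/(A_1,\dots,A_n),* )$ is surjective.
   Context: For subsets $A_1,\dots,A_n$ of a space $X$, $X/(A_1,\dots,A_n)$ denotes the quotient space of $X$ by the equivalence relation generated by identifying all points of $A_i$ with each other for each $i$, and $p$ is the quotient map. $\pi_1^{top}(X,x)$ is $\pi_1(X,x)$ with the quotient topology from the loop space $\Omega(X,x)$ with the compact-open topology. A space $Y$ is semi-locally simply connected if every $y\in Y$ has an open neighborhood $U$ such that every loop in $U$ based at $y$ is nullhomotopic in $Y$. *)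

(* Defs.v *)
From Stdlib Require Import Reals Relations.
Open Scope R_scope.

Definition IsTopology {X : Type} (O : (X -> Prop) -> Prop) : Prop :=
  O (fun _ => True) /\
  (forall U V, O U -> O V -> O (fun x => U x /\ V x)) /\
  (forall F : (X -> Prop) -> Prop, (forall U, F U -> O U) ->
      O (fun x => exists U, F U /\ U x)).

Definition I01 : Type := { t : R | 0 <= t <= 1 }.
Definition I0 : I01 := exist _ 0 (conj (Rle_refl 0) Rle_0_1).
Definition I1 : I01 := exist _ 1 (conj Rle_0_1 (Rle_refl 1)).

Definition open_I (U : I01 -> Prop) : Prop :=
  forall t, U t -> exists eps, eps > 0 /\
    forall s : I01, Rabs (proj1_sig s - proj1_sig t) < eps -> U s.

Definition open_II (U : I01 -> I01 -> Prop) : Prop :=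
  forall s t, U s t -> exists eps, eps > 0 /\
    forall s' t' : I01, Rabs (proj1_sig s' - proj1_sig s) < eps ->
       Rabs (proj1_sig t' - proj1_sig t) < eps -> U s' t'.

Section Top.
Context {X : Type} (O : (X -> Prop) -> Prop).

Definition continuous_from_I (f : I01 -> X) : Prop :=
  forall U, O U -> open_I (fun t => U (f t)).

Definition continuous_from_II (H : I01 -> I01 -> X) : Prop :=
  forall U, O U -> open_II (fun s t => U (H s t)).

Definition is_path (f : I01 -> X) (x y : X) : Prop :=
  continuous_from_I f /\ f I0 = x /\ f I1 = y.

Definition is_loop (f : I01 -> X) (x : X) : Prop := is_path f x x.

Definition loop_homotopic (x : X) (f g : I01 -> X) : Prop :=
  exists H : I01 -> I01 -> X, continuous_from_II H /\
    (forall t, H I0 t = f t) /\ (forall t, H I1 t = g t) /\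
    (forall s, H s I0 = x) /\ (forall s, H s I1 = x).

Definition path_connected_set (S : X -> Prop) : Prop :=
  forall x y, S x -> S y -> exists f, is_path f x y /\ forall t, S (f t).

Definition connected_space : Prop :=
  forall U V, O U -> O V -> (forall x, U x \/ V x) ->
    (forall x, U x -> V x -> False) ->
    (forall x, ~ U x) \/ (forall x, ~ V x).

Definition locally_path_connected : Prop :=
  forall x U, O U -> U x -> exists V, O V /\ V x /\
    (forall y, V y -> U y) /\ path_connected_set V.

Definition closure (A : X -> Prop) (x : X) : Prop :=
  forall U, O U -> U x -> exists y, U y /\ A y.

Definition semi_locally_simply_connected : Prop :=
  forall y, exists U, O U /\ U y /\
    forall f, is_loop f y -> (forall t, U (f t)) ->
      loop_homotopic y f (fun _ => y).

End Top.

Definition ident_rel {X : Type} (n : nat) (A : nat -> X -> Prop) : relation X :=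
  clos_refl_sym_trans X (fun x y => exists i, (i < n)%nat /\ A i x /\ A i y).

Definition is_quotient_by {X Y : Type} (OX : (X -> Prop) -> Prop)
    (OY : (Y -> Prop) -> Prop) (n : nat) (A : nat -> X -> Prop) (p : X -> Y) : Prop :=
  (forall y, exists x, p x = y) /\
  (forall x x', p x = p x' <-> ident_rel n A x x') /\
  (forall V : Y -> Prop, OY V <-> OX (fun x => V (p x))).

(* Main.v *)
Require Import Defs.
From Stdlib Require Import Reals Relations Lra Classical ProofIrrelevance FunctionalExtensionality PropExtensionality.
From Stdlib Require Import Relations.Operators_Properties.
Open Scope R_scope.

Notation vI := (@proj1_sig R (fun t => 0 <= t <= 1)).

Lemma clamp_bounds r : 0 <= Rmax 0 (Rmin 1 r) <= 1.
Proof. unfold Rmax, Rmin; repeat destruct Rle_dec; lra. Qed.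

Definition mkI (r : R) : I01 := exist _ (Rmax 0 (Rmin 1 r)) (clamp_bounds r).

Lemma vI_bounds (t : I01) : 0 <= vI t <= 1.
Proof. destruct t; simpl; auto. Qed.

Lemma I01_eq (s t : I01) : vI s = vI t -> s = t.
Proof. destruct s as [s hs], t as [t ht]; simpl; intro; subst; f_equal; apply proof_irrelevance. Qed.

Lemma vmkI r : vI (mkI r) = Rmax 0 (Rmin 1 r).
Proof. reflexivity. Qed.
Lemma vmkI_in r : 0 <= r <= 1 -> vI (mkI r) = r.
Proof. intros; rewrite vmkI; unfold Rmax, Rmin; repeat destruct Rle_dec; lra. Qed.
Lemma vmkI_le0 r : r <= 0 -> vI (mkI r) = 0.
Proof. intros; rewrite vmkI; unfold Rmax, Rmin; repeat destruct Rle_dec; lra. Qed.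
Lemma vmkI_ge1 r : 1 <= r -> vI (mkI r) = 1.
Proof. intros; rewrite vmkI; unfold Rmax, Rmin; repeat destruct Rle_dec; lra. Qed.
Lemma vmkI_b r : 0 <= vI (mkI r) <= 1.
Proof. apply vI_bounds. Qed.
Lemma mkI_v t : mkI (vI t) = t.
Proof. apply I01_eq. apply vmkI_in, vI_bounds. Qed.
Lemma mkI_clamp r : mkI (vI (mkI r)) = mkI r.
Proof. apply mkI_v. Qed.
Lemma vI0 : vI I0 = 0. Proof. reflexivity. Qed.
Lemma vI1 : vI I1 = 1. Proof. reflexivity. Qed.
Lemma mkI0 : mkI 0 = I0. Proof. apply I01_eq. rewrite vmkI_in; simpl; lra. Qed.
Lemma mkI1 : mkI 1 = I1. Proof. apply I01_eq. rewrite vmkI_in; simpl; lra. Qed.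
Lemma mkI_eq a b : a = b -> mkI a = mkI b. Proof. intros ->; reflexivity. Qed.

Lemma mkI_lip a b : Rabs (vI (mkI a) - vI (mkI b)) <= Rabs (a - b).
Proof. rewrite !vmkI. unfold Rmax, Rmin, Rabs; repeat destruct Rle_dec; repeat destruct Rcase_abs; lra. Qed.

Definition lip2 (psi : I01 -> I01 -> R) : Prop :=
  exists K, 0 < K /\ forall s t s' t',
    Rabs (psi s' t' - psi s t) <= K * (Rabs (vI s' - vI s) + Rabs (vI t' - vI t)).

Lemma small_aux K e a b : 0 < K -> 0 < e -> a < e / (2*K) -> b < e/(2*K) -> K*(a+b) < e.
Proof.
  intros HK He Ha Hb. assert (E : K * (e/(2*K)) = e/2) by (field; lra).
  assert (K*a < e/2). { rewrite <- E. apply Rmult_lt_compat_l; auto. }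
  assert (K*b < e/2). { rewrite <- E. apply Rmult_lt_compat_l; auto. }
  lra.
Qed.

Lemma lip2_const c : lip2 (fun _ _ => c).
Proof. exists 1. split; [lra|]. intros. rewrite Rminus_diag, Rabs_R0.
  pose proof (Rabs_pos (vI s' - vI s)); pose proof (Rabs_pos (vI t' - vI t)); lra. Qed.
Lemma lip2_s : lip2 (fun s _ => vI s).
Proof. exists 1. split; [lra|]. intros. pose proof (Rabs_pos (vI t' - vI t)); lra. Qed.
Lemma lip2_t : lip2 (fun _ t => vI t).
Proof. exists 1. split; [lra|]. intros. pose proof (Rabs_pos (vI s' - vI s)); lra. Qed.
Lemma lip2_add f g : lip2 f -> lip2 g -> lip2 (fun s t => f s t + g s t).
Proof. intros [K1 [H1 F1]] [K2 [H2 F2]]. exists (K1+K2). split; [lra|]. intros.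
  specialize (F1 s t s' t'); specialize (F2 s t s' t').
  replace (f s' t' + g s' t' - (f s t + g s t)) with ((f s' t' - f s t) + (g s' t' - g s t)) by ring.
  eapply Rle_trans. apply Rabs_triang. nra. Qed.
Lemma lip2_scal c f : lip2 f -> lip2 (fun s t => c * f s t).
Proof. intros [K [H F]]. exists (K * (Rabs c + 1)). split.
  { pose proof (Rabs_pos c). nra. } intros. specialize (F s t s' t').
  replace (c * f s' t' - c * f s t) with (c * (f s' t' - f s t)) by ring.
  rewrite Rabs_mult. pose proof (Rabs_pos c). pose proof (Rabs_pos (f s' t' - f s t)).
  pose proof (Rabs_pos (vI s' - vI s)); pose proof (Rabs_pos (vI t' - vI t)). nra. Qed.
Lemma lip2_ext f g : (forall s t, f s t = g s t) -> lip2 f -> lip2 g.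
Proof. intros E [K [H F]]. exists K. split; auto. intros. rewrite <- !E. auto. Qed.
Lemma lip2_sub f g : lip2 f -> lip2 g -> lip2 (fun s t => f s t - g s t).
Proof. intros. apply (lip2_ext (fun s t => f s t + (-1) * g s t)). intros; ring.
  apply lip2_add; auto. apply lip2_scal; auto. Qed.
Lemma lip2_clamp f : lip2 f -> lip2 (fun s t => vI (mkI (f s t))).
Proof. intros [K [H F]]. exists K. split; auto. intros. eapply Rle_trans. apply mkI_lip. auto. Qed.
Lemma lip2_mul f g : lip2 f -> lip2 g -> (forall s t, 0 <= f s t <= 1) -> (forall s t, 0 <= g s t <= 1) ->
  lip2 (fun s t => f s t * g s t).
Proof. intros [K1 [H1 F1]] [K2 [H2 F2]] B1 B2. exists (K1+K2). split; [lra|]. intros.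
  specialize (F1 s t s' t'); specialize (F2 s t s' t').
  replace (f s' t' * g s' t' - f s t * g s t) with (f s' t' * (g s' t' - g s t) + g s t * (f s' t' - f s t)) by ring.
  eapply Rle_trans. apply Rabs_triang. rewrite !Rabs_mult.
  pose proof (B1 s' t'); pose proof (B2 s t).
  rewrite (Rabs_right (f s' t')) by lra. rewrite (Rabs_right (g s t)) by lra.
  pose proof (Rabs_pos (g s' t' - g s t)). pose proof (Rabs_pos (f s' t' - f s t)).
  pose proof (Rabs_pos (vI s' - vI s)); pose proof (Rabs_pos (vI t' - vI t)). nra. Qed.

Section Gen.
Context {Z : Type} (O : (Z -> Prop) -> Prop).

Lemma comp_II (H : I01 -> I01 -> Z) p1 p2 : continuous_from_II O H -> lip2 p1 -> lip2 p2 ->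
  continuous_from_II O (fun s t => H (mkI (p1 s t)) (mkI (p2 s t))).
Proof.
  intros HH [K1 [K1p HK1]] [K2 [K2p HK2]] U HU s t Hst.
  destruct (HH U HU _ _ Hst) as [e [ep He]].
  exists (Rmin (e / (2*K1)) (e/(2*K2))). split.
  - apply Rmin_pos; apply Rdiv_lt_0_compat; lra.
  - intros s' t' Hs Ht. pose proof (Rmin_l (e / (2*K1)) (e/(2*K2))). pose proof (Rmin_r (e / (2*K1)) (e/(2*K2))).
    apply He.
    + eapply Rle_lt_trans. apply mkI_lip. eapply Rle_lt_trans. apply HK1. apply small_aux; lra.
    + eapply Rle_lt_trans. apply mkI_lip. eapply Rle_lt_trans. apply HK2. apply small_aux; lra.
Qed.

Lemma cont_ext_II (H H' : I01 -> I01 -> Z) : (forall s t, H s t = H' s t) ->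
  continuous_from_II O H -> continuous_from_II O H'.
Proof. intros E C U HU s t Hst. rewrite <- E in Hst. destruct (C U HU s t Hst) as [e [ep He]].
  exists e. split; auto. intros. rewrite <- E. auto. Qed.

Lemma cont_ext_I (f f' : I01 -> Z) : (forall t, f t = f' t) ->
  continuous_from_I O f -> continuous_from_I O f'.
Proof. intros E C U HU t Ht. rewrite <- E in Ht. destruct (C U HU t Ht) as [e [ep He]].
  exists e. split; auto. intros. rewrite <- E. auto. Qed.

Lemma I_to_II (f : I01 -> Z) : continuous_from_I O f -> continuous_from_II O (fun _ t => f t).
Proof. intros C U HU s t Ht. destruct (C U HU t Ht) as [e [ep He]]. exists e; split; auto. Qed.

Lemma II_to_I (f : I01 -> Z) : continuous_from_II O (fun _ t => f t) -> continuous_from_I O f.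
Proof. intros C U HU t Ht. destruct (C U HU I0 t Ht) as [e [ep He]]. exists e; split; auto.
  intros s Hs. apply (He I0 s); auto. rewrite Rminus_diag, Rabs_R0; lra. Qed.

Lemma swap_II (H : I01 -> I01 -> Z) : continuous_from_II O H -> continuous_from_II O (fun s t => H t s).
Proof. intros C U HU s t Ht. destruct (C U HU t s Ht) as [e [ep He]]. exists e; split; auto. Qed.

Lemma comp_I (f : I01 -> Z) (psi : I01 -> R) : continuous_from_I O f -> lip2 (fun _ t => psi t) ->
  continuous_from_I O (fun t => f (mkI (psi t))).
Proof. intros C L. apply II_to_I.
  pose proof (comp_II (fun _ t => f t) (fun _ _ => 0) (fun _ t => psi t) (I_to_II f C) (lip2_const 0) L).
  exact H. Qed.

Definition pasteII (H1 H2 : I01 -> I01 -> Z) (s t : I01) : Z :=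
  if Rle_dec (vI t) (1/2) then H1 s (mkI (2 * vI t)) else H2 s (mkI (2 * vI t - 1)).

Lemma pasteII_cont H1 H2 : continuous_from_II O H1 -> continuous_from_II O H2 ->
  (forall s, H1 s I1 = H2 s I0) -> continuous_from_II O (pasteII H1 H2).
Proof.
  intros C1 C2 E U HU s t Hst. unfold pasteII in *.
  destruct (Rtotal_order (vI t) (1/2)) as [Hlt|[Heq|Hgt]].
  - destruct (Rle_dec (vI t) (1/2)); [|lra].
    destruct (C1 U HU _ _ Hst) as [e [ep He]].
    exists (Rmin (e/2) (1/2 - vI t)). split. { apply Rmin_pos; lra. }
    intros s' t' Hs Ht. pose proof (Rmin_l (e/2) (1/2 - vI t)); pose proof (Rmin_r (e/2) (1/2 - vI t)).
    assert (vI t' < 1/2). { apply Rabs_def2 in Ht. lra. }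
    destruct (Rle_dec (vI t') (1/2)); [|lra]. apply He. lra.
    eapply Rle_lt_trans. apply mkI_lip. apply Rabs_def2 in Ht. apply Rabs_def1; lra.
  - destruct (Rle_dec (vI t) (1/2)); [|lra].
    assert (mkI (2 * vI t) = I1). { rewrite Heq. rewrite <- mkI1. apply mkI_eq; lra. }
    rewrite H in Hst. pose proof Hst as Hst2. rewrite E in Hst2.
    destruct (C1 U HU _ _ Hst) as [e1 [ep1 He1]].
    destruct (C2 U HU _ _ Hst2) as [e2 [ep2 He2]].
    exists (Rmin e1 e2 / 2). split. { pose proof (Rmin_pos e1 e2 ep1 ep2); lra. }
    intros s' t' Hs Ht. pose proof (Rmin_l e1 e2); pose proof (Rmin_r e1 e2).
    pose proof (Rmin_pos e1 e2 ep1 ep2).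
    apply Rabs_def2 in Ht.
    destruct (Rle_dec (vI t') (1/2)).
    + apply He1. apply Rabs_def2 in Hs; apply Rabs_def1; lra.
      rewrite <- mkI1. eapply Rle_lt_trans. apply mkI_lip. rewrite Rabs_minus_sym. apply Rabs_def1; lra.
    + apply He2. apply Rabs_def2 in Hs; apply Rabs_def1; lra.
      rewrite <- mkI0. eapply Rle_lt_trans. apply mkI_lip. apply Rabs_def1; lra.
  - destruct (Rle_dec (vI t) (1/2)); [lra|].
    destruct (C2 U HU _ _ Hst) as [e [ep He]].
    exists (Rmin (e/2) (vI t - 1/2)). split. { apply Rmin_pos; lra. }
    intros s' t' Hs Ht. pose proof (Rmin_l (e/2) (vI t - 1/2)); pose proof (Rmin_r (e/2) (vI t - 1/2)).
    assert (vI t' > 1/2). { apply Rabs_def2 in Ht. lra. }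
    destruct (Rle_dec (vI t') (1/2)); [lra|]. apply He. lra.
    eapply Rle_lt_trans. apply mkI_lip. apply Rabs_def2 in Ht. apply Rabs_def1; lra.
Qed.

End Gen.

Ltac split5 := split; [|split; [|split; [|split]]].

Section Gen.
Context {Z : Type} (O : (Z -> Prop) -> Prop).

Definition hom (x y : Z) (al be : I01 -> Z) : Prop :=
  exists H : I01 -> I01 -> Z, continuous_from_II O H /\
    (forall t, H I0 t = al t) /\ (forall t, H I1 t = be t) /\
    (forall s, H s I0 = x) /\ (forall s, H s I1 = y).

Definition concat (al be : I01 -> Z) (t : I01) : Z :=
  if Rle_dec (vI t) (1/2) then al (mkI (2 * vI t)) else be (mkI (2 * vI t - 1)).
Definition inv (al : I01 -> Z) (t : I01) : Z := al (mkI (1 - vI t)).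

Lemma concat_0 al be : concat al be I0 = al I0.
Proof. unfold concat. destruct Rle_dec; simpl in *; [|lra]. f_equal. rewrite <- mkI0; apply mkI_eq; ring. Qed.
Lemma concat_1 al be : concat al be I1 = be I1.
Proof. unfold concat. destruct Rle_dec; simpl in *; [lra|]. f_equal. rewrite <- mkI1; apply mkI_eq; ring. Qed.
Lemma inv_0 al : inv al I0 = al I1.
Proof. unfold inv. f_equal. rewrite <- mkI1; apply mkI_eq; simpl; ring. Qed.
Lemma inv_1 al : inv al I1 = al I0.
Proof. unfold inv. f_equal. rewrite <- mkI0; apply mkI_eq; simpl; ring. Qed.

Lemma concat_cont al be : continuous_from_I O al -> continuous_from_I O be -> al I1 = be I0 ->
  continuous_from_I O (concat al be).
Proof. intros C1 C2 E. apply II_to_I.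
  apply (cont_ext_II O (pasteII (fun _ t => al t) (fun _ t => be t))).
  { intros; reflexivity. }
  apply pasteII_cont; auto; apply I_to_II; auto. Qed.

Lemma concat_path al be x y z : is_path O al x y -> is_path O be y z -> is_path O (concat al be) x z.
Proof. intros [C1 [E1 F1]] [C2 [E2 F2]]. split; [|split].
  - apply concat_cont; auto; congruence.
  - rewrite concat_0; auto.
  - rewrite concat_1; auto. Qed.

Lemma lip_inv : lip2 (fun _ t => 1 - vI t).
Proof. apply lip2_sub. apply lip2_const. apply lip2_t. Qed.

Lemma inv_cont al : continuous_from_I O al -> continuous_from_I O (inv al).
Proof. intros C. apply (comp_I O al (fun t => 1 - vI t)); auto. apply lip_inv. Qed.

Lemma inv_path al x y : is_path O al x y -> is_path O (inv al) y x.
Proof. intros [C [E F]]. split; [|split]. apply inv_cont; auto. rewrite inv_0; auto. rewrite inv_1; auto. Qed.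

Lemma hom_ext x y al be al' be' : (forall t, al t = al' t) -> (forall t, be t = be' t) ->
  hom x y al be -> hom x y al' be'.
Proof. intros E1 E2 [H [C [H0 [H1 [H2 H3]]]]]. exists H. repeat split; auto.
  intros; rewrite H0; auto. intros; rewrite H1; auto. Qed.

Lemma hom_refl al x y : is_path O al x y -> hom x y al al.
Proof. intros [C [E F]]. exists (fun _ t => al t). repeat split; auto. apply I_to_II; auto. Qed.

Lemma hom_sym x y al be : hom x y al be -> hom x y be al.
Proof. intros [H [C [H0 [H1 [H2 H3]]]]].
  exists (fun s t => H (mkI (1 - vI s)) (mkI (vI t))). repeat split.
  - apply comp_II; auto. apply lip2_sub. apply lip2_const. apply lip2_s. apply lip2_t.
  - intros t. rewrite mkI_v. rewrite <- H1. f_equal. rewrite <- mkI1; apply mkI_eq; simpl; ring.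
  - intros t. rewrite mkI_v. rewrite <- H0. f_equal. rewrite <- mkI0; apply mkI_eq; simpl; ring.
  - intros s. rewrite mkI_v. auto.
  - intros s. rewrite mkI_v. auto.
Qed.

Lemma hom_trans x y al be ga : hom x y al be -> hom x y be ga -> hom x y al ga.
Proof. intros [H [C [H0 [H1 [H2 H3]]]]] [K [D [K0 [K1 [K2 K3]]]]].
  exists (fun s t => pasteII (fun a b => H b a) (fun a b => K b a) t s). repeat split.
  - apply swap_II. apply pasteII_cont; try apply swap_II; auto.
    intros; rewrite H1, K0; auto.
  - intros t. unfold pasteII. destruct Rle_dec; simpl in *; [|lra]. rewrite <- H0. f_equal.
    rewrite <- mkI0; apply mkI_eq; ring.
  - intros t. unfold pasteII. destruct Rle_dec; simpl in *; [lra|]. rewrite <- K1. f_equal.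
    rewrite <- mkI1; apply mkI_eq; ring.
  - intros s. unfold pasteII. destruct Rle_dec; auto.
  - intros s. unfold pasteII. destruct Rle_dec; auto.
Qed.

Lemma hom_concat x y z al al' be be' : hom x y al al' -> hom y z be be' ->
  hom x z (concat al be) (concat al' be').
Proof. intros [H [C [H0 [H1 [H2 H3]]]]] [K [D [K0 [K1 [K2 K3]]]]].
  exists (pasteII H K). repeat split.
  - apply pasteII_cont; auto. intros; rewrite H3, K2; auto.
  - intros t. unfold pasteII, concat. destruct Rle_dec; auto.
  - intros t. unfold pasteII, concat. destruct Rle_dec; auto.
  - intros s. unfold pasteII. destruct Rle_dec; simpl in *; [|lra]. rewrite <- (H2 s). f_equal.
    rewrite <- mkI0; apply mkI_eq; ring.
  - intros s. unfold pasteII. destruct Rle_dec; simpl in *; [lra|]. rewrite <- (K3 s). f_equal.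
    rewrite <- mkI1; apply mkI_eq; ring.
Qed.

Definition spec (a b : Z) : Prop := forall W, O W -> W a -> W b.

Lemma spec_hom x y al be : continuous_from_I O al -> continuous_from_I O be ->
  (forall t, spec (al t) (be t)) -> al I0 = x -> be I0 = x -> al I1 = y -> be I1 = y ->
  hom x y al be.
Proof. intros C1 C2 S A0 B0 A1 B1.
  exists (fun s t => if Rle_dec (vI s) 0 then al t else be t). repeat split.
  - intros U HU s t Hst. destruct (Rle_dec (vI s) 0).
    + destruct (C1 U HU t Hst) as [e1 [ep1 He1]].
      destruct (C2 U HU t (S t U HU Hst)) as [e2 [ep2 He2]].
      exists (Rmin e1 e2). split. apply Rmin_pos; lra.
      intros s' t' Hs Ht. pose proof (Rmin_l e1 e2); pose proof (Rmin_r e1 e2).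
      destruct (Rle_dec (vI s') 0). apply He1; lra. apply He2; lra.
    + destruct (C2 U HU t Hst) as [e2 [ep2 He2]].
      exists (Rmin e2 (vI s)). split. apply Rmin_pos; lra.
      intros s' t' Hs Ht. pose proof (Rmin_l e2 (vI s)); pose proof (Rmin_r e2 (vI s)).
      apply Rabs_def2 in Hs.
      destruct (Rle_dec (vI s') 0). lra. apply He2; lra.
  - intros t. destruct Rle_dec; simpl in *; auto; lra.
  - intros t. destruct Rle_dec; simpl in *; auto; lra.
  - intros s. destruct Rle_dec; auto; congruence.
  - intros s. destruct Rle_dec; auto; congruence.
Qed.

Lemma reparam (al : I01 -> Z) p1 p2 x y : continuous_from_I O al ->
  lip2 (fun _ t => p1 t) -> lip2 (fun _ t => p2 t) -> p1 I0 = p2 I0 -> p1 I1 = p2 I1 ->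
  al (mkI (p1 I0)) = x -> al (mkI (p1 I1)) = y ->
  hom x y (fun t => al (mkI (p1 t))) (fun t => al (mkI (p2 t))).
Proof. intros C L1 L2 E0 E1 X0 X1.
  assert (L : lip2 (fun s t => (1 - vI s) * vI (mkI (p1 t)) + vI s * vI (mkI (p2 t)))).
  { apply lip2_add; apply lip2_mul.
    + apply lip2_sub. apply lip2_const. apply lip2_s.
    + apply (lip2_clamp (fun _ t => p1 t)); auto.
    + intros; pose proof (vI_bounds s); lra.
    + intros; apply vmkI_b.
    + apply lip2_s.
    + apply (lip2_clamp (fun _ t => p2 t)); auto.
    + intros; apply vI_bounds.
    + intros; apply vmkI_b. }
  exists (fun s t => al (mkI ((1 - vI s) * vI (mkI (p1 t)) + vI s * vI (mkI (p2 t))))).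
  split5.
  - exact (comp_II O (fun _ t => al t) (fun _ _ => 0) _ (I_to_II O al C) (lip2_const 0) L).
  - intros t. f_equal. etransitivity; [|apply mkI_clamp]. apply mkI_eq. simpl; ring.
  - intros t. f_equal. etransitivity; [|apply mkI_clamp]. apply mkI_eq. simpl; ring.
  - intros s. rewrite <- X0. f_equal. etransitivity; [|apply mkI_clamp]. apply mkI_eq. rewrite <- E0. ring.
  - intros s. rewrite <- X1. f_equal. etransitivity; [|apply mkI_clamp]. apply mkI_eq. rewrite <- E1. ring.
Qed.

Lemma unit_r al x y : is_path O al x y -> hom x y (concat al (fun _ => y)) al.
Proof. intros [C [E F]].
  apply (hom_ext x y (fun t => al (mkI (vI (mkI (2 * vI t))))) (fun t => al (mkI (vI t)))).
  - intros t. unfold concat. destruct Rle_dec. rewrite mkI_clamp; auto.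
    rewrite vmkI_ge1 by lra. rewrite mkI1; auto.
  - intros; rewrite mkI_v; auto.
  - apply reparam; auto.
    + apply (lip2_clamp (fun _ t => 2 * vI t)). apply lip2_scal, lip2_t.
    + apply lip2_t.
    + rewrite vI0, vmkI_in; lra.
    + rewrite vI1, vmkI_ge1; lra.
    + rewrite vI0, vmkI_in by lra. rewrite <- E; f_equal; rewrite <- mkI0; apply mkI_eq; ring.
    + rewrite vI1, vmkI_ge1 by lra. rewrite mkI1; auto.
Qed.

End Gen.

Definition Qs (l : I01) : R := vI (mkI (3 * vI l)) - vI (mkI (3 * vI l - 2)).
Definition Qt (l : I01) : R := vI (mkI (3 * vI l - 1)).

Lemma Qs_b l : 0 <= Qs l <= 1.
Proof. unfold Qs. rewrite !vmkI. unfold Rmax, Rmin; repeat destruct Rle_dec; lra. Qed.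
Lemma Qt_b l : 0 <= Qt l <= 1.
Proof. unfold Qt. apply vmkI_b. Qed.
Lemma Qs0 : Qs I0 = 0. Proof. unfold Qs. rewrite vI0, vmkI_in, vmkI_le0; lra. Qed.
Lemma Qt0 : Qt I0 = 0. Proof. unfold Qt. rewrite vI0, vmkI_le0; lra. Qed.
Lemma Qs1 : Qs I1 = 0. Proof. unfold Qs. rewrite vI1, vmkI_ge1, vmkI_ge1; lra. Qed.
Lemma Qt1 : Qt I1 = 1. Proof. unfold Qt. rewrite vI1, vmkI_ge1; lra. Qed.
Lemma Q_tri l : Qt l = 0 \/ Qs l = 1 \/ Qt l = 1.
Proof. unfold Qs, Qt. rewrite !vmkI. unfold Rmax, Rmin; repeat destruct Rle_dec; lra. Qed.

Lemma lip_Qs : lip2 (fun l _ => Qs l).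
Proof. unfold Qs. apply (lip2_sub (fun l _ => vI (mkI (3 * vI l))) (fun l _ => vI (mkI (3 * vI l - 2)))).
  apply (lip2_clamp (fun l _ => 3 * vI l)). apply lip2_scal, lip2_s.
  apply (lip2_clamp (fun l _ => 3 * vI l - 2)). apply lip2_sub. apply lip2_scal, lip2_s. apply lip2_const. Qed.
Lemma lip_Qt : lip2 (fun l _ => Qt l).
Proof. unfold Qt. apply (lip2_clamp (fun l _ => 3 * vI l - 1)). apply lip2_sub. apply lip2_scal, lip2_s. apply lip2_const. Qed.

Lemma mkI_eqv a t : a = vI t -> mkI a = t.
Proof. intros ->; apply mkI_v. Qed.

Section Gen.
Context {Z : Type} (O : (Z -> Prop) -> Prop).

Lemma square (K : I01 -> I01 -> Z) (r : I01 -> R) z : continuous_from_II O K ->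
  lip2 (fun _ t => r t) -> (forall t, 0 <= r t <= 1) ->
  (forall s, K s I0 = z) -> (forall s, K I1 s = z) -> (forall s, K s I1 = z) ->
  continuous_from_II O (fun l t => K (mkI (r t * Qs l)) (mkI (1/2 + r t * Qt l - 1/2 * r t))) /\
  (forall l t, r t = 1 -> K (mkI (r t * Qs l)) (mkI (1/2 + r t * Qt l - 1/2 * r t)) = z) /\
  (forall t, K (mkI (r t * Qs I0)) (mkI (1/2 + r t * Qt I0 - 1/2 * r t)) = K I0 (mkI (1/2 - 1/2 * r t))) /\
  (forall t, K (mkI (r t * Qs I1)) (mkI (1/2 + r t * Qt I1 - 1/2 * r t)) = K I0 (mkI (1/2 + 1/2 * r t))) /\
  (forall l t, r t = 0 -> K (mkI (r t * Qs l)) (mkI (1/2 + r t * Qt l - 1/2 * r t)) = K I0 (mkI (1/2))).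
Proof. intros C L B E0 E1 E2. split5.
  - apply comp_II; auto.
    + apply (lip2_mul (fun _ t => r t) (fun l _ => Qs l)); auto. apply lip_Qs. intros; apply Qs_b.
    + apply lip2_sub. apply lip2_add. apply lip2_const.
      apply (lip2_mul (fun _ t => r t) (fun l _ => Qt l)); auto. apply lip_Qt. intros; apply Qt_b.
      apply lip2_scal; auto.
  - intros l t R1. rewrite R1. destruct (Q_tri l) as [H|[H|H]]; rewrite H.
    + replace (1/2 + 1*0 - 1/2*1) with 0 by ring. rewrite mkI0; auto.
    + replace (1*1) with 1 by ring. rewrite mkI1; auto.
    + replace (1/2 + 1*1 - 1/2*1) with 1 by ring. rewrite mkI1; auto.
  - intros t. rewrite Qs0, Qt0. replace (r t * 0) with 0 by ring. rewrite mkI0. f_equal. apply mkI_eq; ring.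
  - intros t. rewrite Qs1, Qt1. replace (r t * 0) with 0 by ring. rewrite mkI0. f_equal. apply mkI_eq. lra.
  - intros l t R0. rewrite R0. replace (0 * Qs l) with 0 by ring. rewrite mkI0. f_equal. apply mkI_eq; ring.
Qed.

Lemma cancel1 x y al ga : is_path O al x y -> is_path O ga x y ->
  hom O x x (concat al (inv ga)) (fun _ => x) -> hom O x y al ga.
Proof. intros [Ca [Ea Fa]] [Cg [Eg Fg]] [K [C [K0 [K1 [K2 K3]]]]].
  destruct (square K (fun t => 1 - vI t) x C lip_inv) as [HC [Hz [HI0 [HI1 Hr0]]]]; auto.
  { intros; pose proof (vI_bounds t); lra. }
  eexists. split5; [exact HC| | | |].
  - intros t. cbv beta. rewrite HI0, K0. unfold concat. rewrite vmkI_in by (pose proof (vI_bounds t); lra).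
    destruct Rle_dec; [|pose proof (vI_bounds t); lra]. f_equal. apply mkI_eqv. lra.
  - intros t. cbv beta. rewrite HI1, K0. unfold concat. rewrite vmkI_in by (pose proof (vI_bounds t); lra).
    pose proof (vI_bounds t). destruct Rle_dec.
    + assert (T : t = I1) by (apply I01_eq; simpl; lra). subst t. rewrite Fg, <- Fa. f_equal.
      apply mkI_eqv. simpl. lra.
    + unfold inv. f_equal. apply mkI_eqv. rewrite vmkI_in by lra. lra.
  - intros s. apply Hz. rewrite vI0; lra.
  - intros s. cbv beta. rewrite Hr0 by (rewrite vI1; lra). rewrite K0. unfold concat.
    rewrite vmkI_in by lra. destruct Rle_dec; [|lra]. rewrite <- Fa. f_equal. apply mkI_eqv. simpl; lra.
Qed.

Lemma cancel2 x y al ga : is_path O al x y -> is_path O ga x y ->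
  hom O y y (concat (inv al) ga) (fun _ => y) -> hom O x y al ga.
Proof. intros [Ca [Ea Fa]] [Cg [Eg Fg]] [K [C [K0 [K1 [K2 K3]]]]].
  destruct (square K (fun t => vI t) y C lip2_t) as [HC [Hz [HI0 [HI1 Hr0]]]]; auto.
  { intros; apply vI_bounds. }
  eexists. split5; [exact HC| | | |].
  - intros t. cbv beta. rewrite HI0, K0. unfold concat. pose proof (vI_bounds t).
    rewrite vmkI_in by lra.
    destruct Rle_dec; [|lra]. unfold inv. f_equal. apply mkI_eqv. rewrite vmkI_in by lra. lra.
  - intros t. cbv beta. rewrite HI1, K0. unfold concat. pose proof (vI_bounds t). rewrite vmkI_in by lra.
    destruct Rle_dec.
    + assert (T : t = I0) by (apply I01_eq; simpl; lra). subst t. rewrite Eg, <- Ea. unfold inv. f_equal.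
      apply mkI_eqv. rewrite vmkI_in by lra. simpl. lra.
    + f_equal. apply mkI_eqv. lra.
  - intros s. cbv beta. rewrite Hr0 by (rewrite vI0; lra). rewrite K0. unfold concat.
    rewrite vmkI_in by lra. destruct Rle_dec; [|lra]. unfold inv. rewrite <- Ea. f_equal. apply mkI_eqv.
    rewrite vmkI_in by lra. simpl; lra.
  - intros s. apply Hz. rewrite vI1; lra.
Qed.

End Gen.

Lemma const_path {Z} (O : (Z -> Prop) -> Prop) z : is_path O (fun _ => z) z z.
Proof. split; auto. intros U HU t Ht. exists 1. split; [lra|]. auto. Qed.

Section Top.
Context (X : Type) (OX : (X -> Prop) -> Prop) (HX : IsTopology OX)
  (n : nat) (A : nat -> X -> Prop)
  (HAopen : forall i, (i < n)%nat -> OX (A i))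
  (HAcl : forall i, (i < n)%nat -> path_connected_set OX (closure OX (A i)))
  (Y : Type) (OY : (Y -> Prop) -> Prop) (p : X -> Y)
  (Hquot : is_quotient_by OX OY n A p).

Lemma p_cont W : OY W -> OX (fun x => W (p x)).
Proof. destruct Hquot as [_ [_ H]]. apply H. Qed.

Lemma map_cont f : continuous_from_I OX f -> continuous_from_I OY (fun t => p (f t)).
Proof. intros C U HU. apply (C _ (p_cont U HU)). Qed.

Lemma map_path f x y : is_path OX f x y -> is_path OY (fun t => p (f t)) (p x) (p y).
Proof. intros [C [E F]]. split; [apply map_cont; auto|]. rewrite E, F; auto. Qed.

Lemma peq_rel x y : p x = p y -> ident_rel n A x y.
Proof. destruct Hquot as [_ [H _]]. apply H. Qed.
Lemma rel_peq x y : ident_rel n A x y -> p x = p y.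
Proof. destruct Hquot as [_ [H _]]. apply H. Qed.

Lemma ident_not_A x y : ident_rel n A x y ->
  x = y \/ ((exists i, (i < n)%nat /\ A i x) /\ (exists j, (j < n)%nat /\ A j y)).
Proof. induction 1.
  - right. destruct H as [i [Hi [H1 H2]]]. split; exists i; auto.
  - left; auto.
  - destruct IHclos_refl_sym_trans as [->|[? ?]]; auto.
  - destruct IHclos_refl_sym_trans1 as [->|[H1 H2]]; destruct IHclos_refl_sym_trans2 as [->|[H3 H4]]; auto.
Qed.

Lemma sat_open V : OX V -> OY (fun y => exists v, V v /\ p v = y).
Proof. intros HV. destruct Hquot as [_ [_ HQ]]. apply HQ.
  destruct HX as [_ [_ Hun]].
  set (F := fun W : X -> Prop => W = V \/ exists i, (i < n)%nat /\ W = A i /\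
              exists z, A i z /\ exists v, V v /\ p v = p z).
  assert (HO : OX (fun x => exists W, F W /\ W x)).
  { apply Hun. intros W [->|[i [Hi [-> _]]]]; auto. }
  replace (fun x => exists v, V v /\ p v = p x) with (fun x => exists W, F W /\ W x); auto.
  apply functional_extensionality; intros x. apply propositional_extensionality. split.
  - intros [W [[->|[i [Hi [-> [z [Hz [v [Hv E]]]]]]]] Hx]].
    + exists x; auto.
    + exists v. split; auto. rewrite E. apply rel_peq. apply rst_step. exists i; auto.
  - intros [v [Hv E]]. destruct (ident_not_A x v (peq_rel x v (eq_sym E))) as [->|[[i [Hi Hx]] _]].
    + exists V; split; auto. left; auto.
    + exists (A i). split; auto. right. exists i. split; auto. split; auto. exists x; split; auto. exists v; auto.
Qed.

Lemma A_closure i x : A i x -> closure OX (A i) x.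
Proof. intros H U _ Hx. exists x; auto. Qed.

Lemma closure_spec i x z : (i < n)%nat -> A i x -> closure OX (A i) z -> spec OY (p z) (p x).
Proof. intros Hi Hx Hz W HW Wz. destruct (Hz _ (p_cont W HW) Wz) as [w [Ww Aw]].
  replace (p x) with (p w); auto. apply rel_peq. apply rst_step. exists i; auto. Qed.

Lemma class_path x y : ident_rel n A x y ->
  exists f, is_path OX f x y /\ forall s, spec OY (p (f s)) (p x).
Proof. intros H. apply clos_rst_rst1n in H. induction H.
  - exists (fun _ => x). split. apply const_path. intros s W _ Hw; auto.
  - destruct IHclos_refl_sym_trans_1n as [f2 [P2 S2]].
    assert (Hi : exists i, (i < n)%nat /\ A i x /\ A i y).
    { destruct H as [[i [? [? ?]]]|[i [? [? ?]]]]; exists i; auto. }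
    destruct Hi as [i [Hi [Ax Ay]]].
    destruct (HAcl i Hi x y (A_closure i x Ax) (A_closure i y Ay)) as [h [Ph Ch]].
    assert (E : p y = p x). { apply rel_peq. apply rst_sym, rst_step. exists i; auto. }
    exists (concat h f2). split. eapply concat_path; eauto.
    intros s. unfold concat. destruct Rle_dec.
    + eapply closure_spec; eauto.
    + rewrite <- E. auto.
Qed.

Lemma class_hom x y : p x = p y ->
  exists f, is_path OX f x y /\ hom OY (p x) (p x) (fun t => p (f t)) (fun _ => p x).
Proof. intros E. destruct (class_path x y (peq_rel x y E)) as [f [Pf Sf]].
  exists f. split; auto. destruct (map_path f x y Pf) as [C [E0 E1]].
  apply spec_hom; auto. apply const_path. congruence.
Qed.

End Top.

Lemma real_ind (Q : R -> Prop) : Q 0 ->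
  (forall t, 0 <= t <= 1 -> exists d, d > 0 /\
     (forall u, t - d < u -> u <= t -> 0 <= u -> Q u -> Q t) /\
     (Q t -> forall w, t <= w -> w < t + d -> w <= 1 -> Q w)) -> Q 1.
Proof. intros Q0 Step.
  set (E := fun r => 0 <= r <= 1 /\ forall c, 0 <= c <= r -> Q c).
  assert (E0 : E 0). { split. lra. intros c Hc. replace c with 0 by lra. auto. }
  assert (Eb : bound E). { exists 1. intros r [Hr _]. lra. }
  destruct (completeness E Eb (ex_intro _ 0 E0)) as [s [Hub Hlub]].
  assert (s0 : 0 <= s) by (apply Hub; auto).
  assert (s1 : s <= 1). { apply Hlub. intros r [Hr _]; lra. }
  destruct (Step s (conj s0 s1)) as [d [dp [SA SB]]].
  assert (C1 : exists r, E r /\ r > s - d).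
  { apply NNPP. intro Hn. assert (s <= s - d). { apply Hlub. intros r Er.
      destruct (Rle_dec r (s - d)); auto. exfalso; apply Hn; exists r; split; auto; lra. } lra. }
  assert (C2 : forall c, 0 <= c < s -> Q c).
  { intros c Hc. destruct (classic (exists r, E r /\ c <= r)) as [[r [[_ Er] Hr]]|Hn].
    - apply Er; lra.
    - assert (s <= c). { apply Hlub. intros r Er. destruct (Rle_dec r c); auto.
        exfalso; apply Hn; exists r; split; auto; lra. } lra. }
  destruct C1 as [r [[Hr Er] Hrd]].
  assert (rs : r <= s) by (apply Hub; split; auto).
  assert (Qs : Q s) by (apply (SA r); auto; try lra; apply Er; lra).
  set (w := Rmin 1 (s + d/2)).
  assert (Ew : E w).
  { pose proof (Rmin_l 1 (s + d/2)); pose proof (Rmin_r 1 (s + d/2)).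
    assert (HH : w >= 0 /\ w >= s /\ w <= 1 /\ w <= s + d/2). { unfold w; unfold Rmin; destruct Rle_dec; lra. }
    destruct HH as [? [? [? ?]]]. split. lra. intros c Hc. destruct (Rtotal_order c s) as [Hl|[He|Hg]].
    - apply C2; lra.
    - subst; auto.
    - apply SB; auto; unfold w in *; lra. }
  assert (w <= s) by (apply Hub; auto).
  assert (s = 1). { unfold w, Rmin in *; destruct Rle_dec; lra. }
  rewrite <- H0; auto.
Qed.

Definition seg {Z} (g : I01 -> Z) (u w : R) (s : I01) : Z := g (mkI (u + vI s * (w - u))).

Lemma lip_lin u w : lip2 (fun _ s => u + vI s * (w - u)).
Proof. apply (lip2_ext (fun _ s => u + (w - u) * vI s)). intros; ring.
  apply lip2_add. apply lip2_const. apply lip2_scal, lip2_t. Qed.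

Section S.
Context {Z : Type} (O : (Z -> Prop) -> Prop).

Lemma seg_path g u w : continuous_from_I O g -> is_path O (seg g u w) (g (mkI u)) (g (mkI w)).
Proof. intros C. split; [|split].
  - apply (comp_I O g (fun s => u + vI s * (w - u))); auto. apply lip_lin.
  - unfold seg. f_equal. apply mkI_eq. rewrite vI0; ring.
  - unfold seg. f_equal. apply mkI_eq. rewrite vI1; ring.
Qed.

Lemma seg_R1 g u v : continuous_from_I O g ->
  hom O (g (mkI 0)) (g (mkI v)) (concat (seg g 0 u) (seg g u v)) (seg g 0 v).
Proof. intros C.
  apply (hom_ext O _ _ (fun s => g (mkI (u * vI (mkI (2 * vI s)) + (v - u) * vI (mkI (2 * vI s - 1)))))
     (fun s => g (mkI (0 + vI s * (v - 0))))).
  - intros s. unfold concat, seg. destruct Rle_dec.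
    + f_equal. apply mkI_eq. rewrite (vmkI_le0 (2 * vI s - 1)) by lra. ring.
    + f_equal. apply mkI_eq. rewrite (vmkI_ge1 (2 * vI s)) by lra. ring.
  - intros; reflexivity.
  - apply reparam; auto.
    + apply lip2_add. apply lip2_scal. apply (lip2_clamp (fun _ s => 2 * vI s)). apply lip2_scal, lip2_t.
      apply lip2_scal. apply (lip2_clamp (fun _ s => 2 * vI s - 1)). apply lip2_sub. apply lip2_scal, lip2_t. apply lip2_const.
    + apply lip_lin.
    + rewrite vI0, vmkI_in, vmkI_le0; lra.
    + rewrite vI1, vmkI_ge1, vmkI_in; lra.
    + rewrite vI0, vmkI_in, vmkI_le0 by lra. f_equal. apply mkI_eq; ring.
    + rewrite vI1, vmkI_ge1, vmkI_in by lra. f_equal. apply mkI_eq; ring.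
Qed.

Lemma concat_map {W} (q : W -> Z) f1 f2 s : q (concat f1 f2 s) = concat (fun t => q (f1 t)) (fun t => q (f2 t)) s.
Proof. unfold concat. destruct Rle_dec; auto. Qed.

End S.

Lemma seg_val u w s : 0 <= u <= 1 -> 0 <= w <= 1 ->
  vI (mkI (u + vI s * (w - u))) = u + vI s * (w - u) /\
  (u <= w -> u <= u + vI s * (w - u) <= w) /\ (w <= u -> w <= u + vI s * (w - u) <= u).
Proof. intros Hu Hw. pose proof (vI_bounds s).
  assert (u <= w -> u <= u + vI s * (w - u) <= w) by (intros; split; nra).
  assert (w <= u -> w <= u + vI s * (w - u) <= u) by (intros; split; nra).
  split; auto. apply vmkI_in. destruct (Rle_dec u w); [destruct H0|destruct H1]; try lra. Qed.

Theorem corollary3p6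
  (X : Type) (OX : (X -> Prop) -> Prop) (HX : IsTopology OX)
  (Hconn : connected_space OX) (Hlpc : locally_path_connected OX)
  (n : nat) (A : nat -> X -> Prop)
  (HAopen : forall i, (i < n)%nat -> OX (A i))
  (HAcl : forall i, (i < n)%nat -> path_connected_set OX (closure OX (A i)))
  (Y : Type) (OY : (Y -> Prop) -> Prop) (p : X -> Y)
  (Hquot : is_quotient_by OX OY n A p)
  (Hslsc : semi_locally_simply_connected OY)
  (a : X) (Ha : exists i, (i < n)%nat /\ A i a) :
  forall g : I01 -> Y, is_loop OY g (p a) ->
    exists f : I01 -> X, is_loop OX f a /\
      loop_homotopic OY (p a) (fun t => p (f t)) g.
Proof.
  intros g [Cg [G0 G1]].
  assert (Gm0 : g (mkI 0) = p a) by (rewrite mkI0; auto).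
  set (Q := fun b => forall x', p x' = g (mkI b) -> exists f, is_path OX f a x' /\
              hom OY (p a) (g (mkI b)) (fun s => p (f s)) (seg g 0 b)).
  assert (Q1 : Q 1).
  { apply real_ind.
    - intros x' Hx'. rewrite Gm0 in *.
      destruct (class_hom X OX n A HAcl Y OY p Hquot a x' (eq_sym Hx')) as [f [Pf Hf]].
      exists f. split; auto. eapply hom_ext; [intros; reflexivity| |exact Hf].
      intros s. unfold seg. rewrite <- Gm0. f_equal. apply mkI_eq; ring.
    - intros t Ht.
      destruct (proj1 Hquot (g (mkI t))) as [x0 Hx0].

      destruct (Hslsc (g (mkI t))) as [U [OU [Uy0 HU]]].
      destruct (Hlpc x0 (fun x => U (p x)) (p_cont X OX n A Y OY p Hquot U OU)) as [V [OV [Vx0 [VU PV]]]].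
      { rewrite Hx0; auto. }
      pose proof (sat_open X OX HX n A HAopen Y OY p Hquot V OV) as ON.
      destruct (Cg _ ON (mkI t)) as [eps [epsp He]]. { exists x0; auto. }
      rewrite (vmkI_in t Ht) in He.
      assert (NU : forall y, (exists v, V v /\ p v = y) -> U y).
      { intros y [v [Vv <-]]. apply VU; auto. }
      exists eps. split; auto. split.
      +
        intros u Hu1 Hu2 Hu0 Qu x' Hx'.
        destruct (He (mkI u)) as [v1 [Vv1 Ev1]].
        { rewrite vmkI_in by lra. apply Rabs_def1; lra. }
        destruct (Qu v1 Ev1) as [f1 [Pf1 Hf1]].
        destruct (PV v1 x0 Vv1 Vx0) as [be [Pbe Vbe]].
        destruct (class_hom X OX n A HAcl Y OY p Hquot x0 x' (eq_trans Hx0 (eq_sym Hx'))) as [ka [Pka Hka]].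
        exists (concat f1 (concat be ka)). split.
        { eapply concat_path; eauto. eapply concat_path; eauto. }
        pose proof (map_path X OX n A Y OY p Hquot be v1 x0 Pbe) as Mbe.
        pose proof (seg_path OY g u t Cg) as Sut.
        rewrite <- Ev1, <- Hx0 in Sut.
        assert (H1 : hom OY (p v1) (p x0) (fun s => p (be s)) (seg g u t)).
        { apply cancel2; auto.
          assert (L : is_loop OY (concat (inv (fun s => p (be s))) (seg g u t)) (p x0)).
          { eapply concat_path; eauto. eapply inv_path; eauto. }
          rewrite Hx0 in L |- *.
          apply (HU _ L). intros s. unfold concat, inv. destruct Rle_dec.
          - apply VU; auto.
          - apply NU. apply He. unfold seg.
            destruct (seg_val u t (mkI (2 * vI s - 1))) as [E1 [E2 _]]; try lra.
            rewrite E1. specialize (E2 Hu2). apply Rabs_def1; lra. }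
        assert (H2 : hom OY (p v1) (p x0) (concat (fun s => p (be s)) (fun s => p (ka s))) (seg g u t)).
        { eapply hom_trans. apply (hom_concat OY _ _ _ _ _ _ _ H1 Hka).
          apply unit_r; auto. }
        rewrite Ev1 in H2. rewrite Hx0 in H2.
        assert (H3 := hom_concat OY _ _ _ _ _ _ _ Hf1 H2).
        assert (H4 := seg_R1 OY g u t Cg). rewrite Gm0 in H4.
        eapply hom_ext; [| intros; reflexivity |]. 2: eapply hom_trans; [exact H3|exact H4].
        intros s. rewrite (concat_map p). apply f_equal2; auto.
        apply functional_extensionality; intros r. rewrite (concat_map p). reflexivity.
      +
        intros Qt w Hw1 Hw2 Hw3 x' Hx'.
        destruct (He (mkI w)) as [v2 [Vv2 Ev2]].
        { rewrite vmkI_in by lra. apply Rabs_def1; lra. }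
        destruct (Qt x0 Hx0) as [f1 [Pf1 Hf1]].
        destruct (PV x0 v2 Vx0 Vv2) as [be [Pbe Vbe]].
        destruct (class_hom X OX n A HAcl Y OY p Hquot v2 x' (eq_trans Ev2 (eq_sym Hx'))) as [ka [Pka Hka]].
        exists (concat f1 (concat be ka)). split.
        { eapply concat_path; eauto. eapply concat_path; eauto. }
        pose proof (map_path X OX n A Y OY p Hquot be x0 v2 Pbe) as Mbe.
        pose proof (seg_path OY g t w Cg) as Stw.
        rewrite <- Ev2, <- Hx0 in Stw.
        assert (H1 : hom OY (p x0) (p v2) (fun s => p (be s)) (seg g t w)).
        { apply cancel1; auto.
          assert (L : is_loop OY (concat (fun s => p (be s)) (inv (seg g t w))) (p x0)).
          { eapply concat_path; eauto. eapply inv_path; eauto. }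
          rewrite Hx0 in L |- *.
          apply (HU _ L). intros s. unfold concat, inv. destruct Rle_dec.
          - apply VU; auto.
          - apply NU. apply He. unfold seg.
            destruct (seg_val t w (mkI (1 - vI (mkI (2 * vI s - 1))))) as [E1 [E2 _]]; try lra.
            rewrite E1. specialize (E2 Hw1). apply Rabs_def1; lra. }
        assert (H2 : hom OY (p x0) (p v2) (concat (fun s => p (be s)) (fun s => p (ka s))) (seg g t w)).
        { eapply hom_trans. apply (hom_concat OY _ _ _ _ _ _ _ H1 Hka).
          apply unit_r; auto. }
        rewrite Ev2 in H2. rewrite Hx0 in H2.
        assert (H3 := hom_concat OY _ _ _ _ _ _ _ Hf1 H2).
        assert (H4 := seg_R1 OY g t w Cg). rewrite Gm0 in H4.
        eapply hom_ext; [| intros; reflexivity |]. 2: eapply hom_trans; [exact H3|exact H4].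
        intros s. rewrite (concat_map p). apply f_equal2; auto.
        apply functional_extensionality; intros r. rewrite (concat_map p). reflexivity. }
  destruct (Q1 a) as [f [Pf Hf]]. { rewrite mkI1; auto. }
  exists f. split; auto.
  rewrite mkI1, G1 in Hf.
  eapply hom_ext; [intros; reflexivity | | exact Hf].
  intros s. unfold seg. f_equal. apply mkI_eqv. ring.
Qed.
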